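(* Let $G$ be a bipartite graph with parts $A,B$, $|A|=|B|=N$, and let $d\in(0,1]$, $\theta>0$. Suppose every vertex of $G$ has degree at least $(1-\theta)dN$ and every two distinct vertices in the same part have at most $(1+\theta)d^2N$ common neighbours. Consider $N\to\infty$ with $\theta\to0$ and $\theta^{4/3}d^2N\to\infty$. Then, for $N$ sufficiently large, $G$ contains a collection of $(1-\theta^{1/3})dN$ pairwise edge-disjoint perfect matchings. *)

(* Defs.v *)
From Stdlib Require Export Reals.
From mathcomp Require Export all_boot.
From mathcomp Require Export perm.
Set Implicit Arguments. Unset Strict Implicit. Unset Printing Implicit Defensive.

(* A bipartite graph with parts A = 'I_N and B = 'I_N is given by its
   bi-adjacency relation adj : 'I_N -> 'I_N -> bool  (adj a b = ab is an edge). *)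

Definition degA (N : nat) (adj : 'I_N -> 'I_N -> bool) (a : 'I_N) : nat :=
  #|[set b : 'I_N | adj a b]|.
Definition degB (N : nat) (adj : 'I_N -> 'I_N -> bool) (b : 'I_N) : nat :=
  #|[set a : 'I_N | adj a b]|.
Definition codegA (N : nat) (adj : 'I_N -> 'I_N -> bool) (a a' : 'I_N) : nat :=
  #|[set b : 'I_N | adj a b && adj a' b]|.
Definition codegB (N : nat) (adj : 'I_N -> 'I_N -> bool) (b b' : 'I_N) : nat :=
  #|[set a : 'I_N | adj a b && adj a b']|.

Definition perfect_matching (N : nat) (adj : 'I_N -> 'I_N -> bool)
  (s : {perm 'I_N}) : Prop := forall a : 'I_N, adj a (s a).

Definition edge_disjoint (N : nat) (s t : {perm 'I_N}) : Prop :=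
  forall a : 'I_N, s a <> t a.

(* Main.v *)
Require Import Defs.
From Stdlib Require Import Reals Lra Psatz ZArith.
From mathcomp Require Import all_boot perm.

Section Hall.
Variables (T1 T2 : finType) (r : T1 -> T2 -> bool) (y0 : T2).

Definition NB (R : {set T2}) (S : {set T1}) : {set T2} :=
  [set y in R | [exists x in S, r x y]].

Lemma NBP (R : {set T2}) (S : {set T1}) y :
  reflect (y \in R /\ exists2 x, x \in S & r x y) (y \in NB R S).
Proof.
rewrite inE; apply: (iffP andP) => [[yR /existsP[x /andP[xS rxy]]]|[yR [x xS rxy]]].
  by split=> //; exists x.
by split=> //; apply/existsP; exists x; rewrite xS.
Qed.

Lemma hall_rec n (L : {set T1}) (R : {set T2}) :
  #|L| <= n ->
  (forall S : {set T1}, S \subset L -> #|S| <= #|NB R S|) ->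
  exists f : T1 -> T2, (forall x, x \in L -> f x \in R /\ r x (f x)) /\ {in L &, injective f}.
Proof.
elim: n L R => [|n IH] L R.
  rewrite leqn0 cards_eq0 => /eqP -> _.
  by exists (fun _ => y0); split=> [x|x]; rewrite inE.
move=> cardL hallL.
have [->|[x0 x0L]] := set_0Vmem L.
  by exists (fun _ => y0); split=> [x|x]; rewrite inE.
case: (boolP [exists S : {set T1}, [&& S \subset L, S != set0, S != L & #|NB R S| <= #|S|]]).
- case/existsP=> S /and4P[sSL S0 SL tight].
  have pSL : S \proper L by rewrite properEneq SL sSL.
  have [f1 [f1P f1I]] : exists f : T1 -> T2, (forall x, x \in S -> f x \in NB R S /\ r x (f x)) /\ {in S &, injective f}.
    apply: IH.
      by rewrite -ltnS (leq_trans (proper_card pSL)).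
    move=> S' sS'S; have := hallL S' (subset_trans sS'S sSL).
    move=> h; apply: (leq_trans h); apply: subset_leq_card; apply/subsetP=> y /NBP[yR [x xS' rxy]].
    apply/NBP; split=> //; last by exists x.
    by apply/NBP; split=> //; exists x => //; apply: (subsetP sS'S).
  have [f2 [f2P f2I]] : exists f : T1 -> T2, (forall x, x \in L :\: S -> f x \in R :\: NB R S /\ r x (f x)) /\ {in L :\: S &, injective f}.
    apply: IH.
      have: 0 < #|S| by rewrite card_gt0.
      have := cardsD L S; rewrite (setIidPr sSL) => -> h.
      rewrite -ltnS; apply: leq_trans cardL.
      by rewrite ltn_subrL h /= (leq_trans h (subset_leq_card sSL)).
    move=> T sT.
    have sTL : T \subset L by apply: subset_trans sT (subsetDl _ _).
    have dTS : [disjoint T & S].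
      rewrite -setI_eq0; apply/eqP/setP=> x; rewrite !inE.
      apply/negbTE/negP=> /andP[/(subsetP sT)]; rewrite inE => /andP[/negbTE->].
      done.
    have h := hallL (T :|: S) ltac:(by rewrite subUset sTL sSL).
    have cTS : #|T :|: S| = #|T| + #|S|.
      rewrite cardsU; have -> : T :&: S = set0 by apply/eqP; rewrite setI_eq0.
      by rewrite cards0 subn0.
    have sub : NB R (T :|: S) \subset NB (R :\: NB R S) T :|: NB R S.
      apply/subsetP => y /NBP[yR [x xTS rxy]]; rewrite in_setU.
      apply/orP; case: (boolP (y \in NB R S)) => yN; [by right|left].
      apply/NBP; split; first by rewrite inE yN.
      exists x => //; move: xTS; rewrite inE => /orP[//|xS].
      by case/negP: yN; apply/NBP; split=> //; exists x.
    have h2 := subset_leq_card sub.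
    have h3 : #|NB (R :\: NB R S) T :|: NB R S| <= #|NB (R :\: NB R S) T| + #|S|.
      by rewrite cardsU (leq_trans (leq_subr _ _)) // leq_add2l.
    by rewrite -(leq_add2r #|S|) -cTS (leq_trans h) // (leq_trans h2).
  have xLS x : x \in L -> x \notin S -> x \in L :\: S by move=> xL xS; rewrite inE xS xL.
  exists (fun x => if x \in S then f1 x else f2 x); split.
    move=> x xL; case: ifP => xS.
      by have [/NBP[h1 _] h2] := f1P x xS.
    have [h1 h2] := f2P x (xLS x xL (negbT xS)); split=> //.
    by move: h1; rewrite inE => /andP[].
  move=> x y xL yL /=; case: ifP => xS; case: ifP => yS.
  - exact: f1I.
  - move=> e; have := (f2P y (xLS y yL (negbT yS))).1.
    by rewrite inE -e (f1P x xS).1.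
  - move=> e; have := (f2P x (xLS x xL (negbT xS))).1.
    by rewrite inE e (f1P y yS).1.
  - by apply: f2I; apply: xLS => //; apply/negbT.
- move=> noS.
  have noS' : forall S : {set T1}, S \subset L -> S != set0 -> S != L -> #|S| < #|NB R S|.
    move=> S sSL S0 SL; rewrite ltnNge; apply: contra noS => h.
    by apply/existsP; exists S; rewrite sSL S0 SL h.
  have : 0 < #|NB R [set x0]|.
    by apply: leq_trans (hallL _ _); rewrite ?cards1 // sub1set.
  rewrite card_gt0 => /set0Pn[y1 Hy1]; case/NBP: Hy1 => y1R [x x0' rxy].
  move: x0'; rewrite inE => /eqP ex; subst x.
  have [f2 [f2P f2I]] : exists f : T1 -> T2, (forall x, x \in L :\ x0 -> f x \in R :\ y1 /\ r x (f x)) /\ {in L :\ x0 &, injective f}.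
    apply: IH.
      have := cardsD1 x0 L; rewrite x0L => e.
      by rewrite -ltnS -add1n -e.
    move=> T sT; have [->|T0] := eqVneq T set0; first by rewrite cards0.
    have sTL : T \subset L := subset_trans sT (subD1set L x0).
    have TL : T != L.
      apply/eqP => e; move: sT; rewrite e => /subsetP/(_ x0 x0L).
      by rewrite !inE eqxx.
    have h := noS' T sTL T0 TL.
    have sub : NB R T \subset NB (R :\ y1) T :|: [set y1].
      apply/subsetP=> y /NBP[yR [x xT rxy']]; rewrite in_setU in_set1.
      rewrite orbC; case: eqVneq => //= ne; apply/NBP; split; first by rewrite !inE ne.
      by exists x.
    have := subset_leq_card sub; rewrite cardsU cards1 => h'.
    have h'' := leq_trans h' (leq_subr _ _).
    by rewrite -ltnS -[(#|NB _ T|).+1]addn1 (leq_trans h h'').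
  exists (fun x => if x == x0 then y1 else f2 x); split.
    move=> x xL; case: eqVneq => [->|ne]; first by split.
    have [h1 h2] := f2P x ltac:(by rewrite !inE ne xL); split => //.
    by move: h1; rewrite !inE => /andP[].
  move=> x y xL yL /=; case: eqVneq => [->|nx]; case: eqVneq => [->|ny] //.
  + move=> e; have := (f2P y ltac:(by rewrite !inE ny yL)).1.
    by rewrite -e !inE eqxx.
  + move=> e; have := (f2P x ltac:(by rewrite !inE nx xL)).1.
    by rewrite e !inE eqxx.
  + by apply: f2I; rewrite !inE ?nx ?ny ?xL ?yL.
Qed.

Lemma hall (L : {set T1}) (R : {set T2}) :
  (forall S : {set T1}, S \subset L -> #|S| <= #|NB R S|) ->
  exists f : T1 -> T2, (forall x, x \in L -> f x \in R /\ r x (f x)) /\ {in L &, injective f}.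
Proof. exact: (@hall_rec #|L|). Qed.
End Hall.
Arguments NB {T1 T2} r R S.
Arguments NBP {T1 T2 r R S y}.
Arguments hall {T1 T2 r} y0 {L R}.

Lemma cardset_sum (T : finType) (P : pred T) : #|[set x | P x]| = \sum_x (P x : nat).
Proof.
rewrite -sum1_card big_mkcond /=; apply: eq_bigr => x _; rewrite inE; by case: (P x).
Qed.

Lemma cardset_sum_in (T : finType) (A : {set T}) (P : pred T) :
  #|[set x in A | P x]| = \sum_(x in A) (P x : nat).
Proof.
rewrite cardset_sum [RHS]big_mkcond /=; apply: eq_bigr => x _; by case: (x \in A).
Qed.

Lemma decomp (N : nat) (y0 : 'I_N) k :
  forall F : 'I_N -> 'I_N -> bool,
  (forall a, #|[set b | F a b]| = k) -> (forall b, #|[set a | F a b]| <= k) ->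
  exists M : 'I_k -> {perm 'I_N}, (forall i a, F a (M i a)) /\
     (forall i j, i <> j -> edge_disjoint (M i) (M j)).
Proof.
elim: k => [|k IH] F degF degF'.
  by exists (fun _ => 1%g); split => -[].
have hallF : forall S : {set 'I_N}, S \subset setT -> #|S| <= #|NB F setT S|.
  move=> S _.
  rewrite -(leq_pmul2l (ltn0Sn k)).
  have e1 : k.+1 * #|S| = \sum_(a in S) \sum_b (F a b : nat).
    rewrite mulnC -sum_nat_const; apply: eq_bigr => a _.
    by rewrite -cardset_sum degF.
  rewrite e1 exchange_big /=.
  rewrite (bigID (fun b => b \in NB F setT S)) /=.
  have -> : \sum_(i | i \notin NB F setT S) \sum_(i0 in S) (F i0 i : nat) = 0.
    apply: big1 => b bN; apply: big1 => a aS.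
    case: (boolP (F a b)) => // Fab; case/negP: bN.
    by apply/NBP; split; [rewrite inE | exists a].
  rewrite addn0 mulnC -sum_nat_const; apply: leq_sum => b _.
  apply: leq_trans (degF' b); rewrite cardset_sum [X in _ <= X](bigID (fun a => a \in S)) /=.
  exact: leq_addr.
have [f [fP fI]] := hall y0 hallF.
have finj : injective f by move=> x y; apply: fI; rewrite inE.
set s := perm finj.
have sF a : F a (s a) by rewrite permE; exact: (fP a (in_setT a)).2.
set F' := fun a b => F a b && (s a != b).
have degF1 a : #|[set b | F' a b]| = k.
  have : [set b | F' a b] = [set b | F a b] :\ s a.
    by apply/setP=> b; rewrite !inE /F' andbC eq_sym.
  move=> ->; have := cardsD1 (s a) [set b | F a b].
  by rewrite inE sF degF add1n => -[].
have degF1' b : #|[set a | F' a b]| <= k.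
  have : [set a | F' a b] = [set a | F a b] :\ (s^-1 b)%g.
    apply/setP=> a; rewrite !inE /F' andbC; congr (_ && _).
    apply/idP/idP.
      by apply: contra => /eqP ->; rewrite permKV.
    by apply: contra => /eqP <-; rewrite permK.
  move=> ->; have := cardsD1 (s^-1 b)%g [set a | F a b].
  have -> : (s^-1 b)%g \in [set a | F a b] by rewrite inE -{2}(permKV s b) sF.
  move=> e; have := degF' b; rewrite e add1n ltnS //.
have [M' [M'F M'D]] := IH F' degF1 degF1'.
exists (fun i => match unlift ord_max i with Some j => M' j | None => s end).
split.
  move=> i a; case: (unliftP ord_max i) => [j _|_].
    by have /andP[] := M'F j a.
  by [].
move=> i j; case: (unliftP ord_max i) => [i' ->|->]; case: (unliftP ord_max j) => [j' ->|->].
- move=> ne; apply: M'D => e; apply: ne; by rewrite e.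
- move=> _ a e; have /andP[_] := M'F i' a; by rewrite e eqxx.
- move=> _ a e; have /andP[_] := M'F j' a; by rewrite -e eqxx.
- by [].
Qed.

Lemma card_sumset (T U : finType) (S : {set T + U}) :
  #|S| = #|[set x | inl x \in S]| + #|[set y | inr y \in S]|.
Proof.
have -> : #|S| = \sum_u (u \in S : nat).
  by rewrite -cardset_sum; apply: eq_card => u; rewrite inE.
by rewrite big_sumType !cardset_sum.
Qed.

Lemma card_pairset (T U : finType) (P : T -> U -> bool) :
  #|[set p : T * U | P p.1 p.2]| = \sum_a #|[set b | P a b]|.
Proof.
rewrite cardset_sum -(pair_bigA _ (fun a b => (P a b : nat))) /=; apply: eq_bigr => a _; by rewrite cardset_sum.
Qed.

Lemma card_ltn N m : #|[set j : 'I_N | j < m]| = minn N m.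
Proof.
rewrite cardset_sum; elim: N => [|N IH]; first by rewrite big_ord0 min0n.
rewrite big_ord_recr /= IH; case: (ltnP N m) => h.
  by rewrite !(minn_idPl _) ?addn1 // ltnW.
by rewrite addn0 !(minn_idPr _) // (leq_trans h).
Qed.

Definition eXY N (adj : 'I_N -> 'I_N -> bool) (X Y : {set 'I_N}) :=
  #|[set p : 'I_N * 'I_N | [&& p.1 \in X, p.2 \in Y & adj p.1 p.2]]|.
Arguments eXY {N}.

Lemma sum_degB N (adj : 'I_N -> 'I_N -> bool) (Z : {set 'I_N}) :
  \sum_p (((p : 'I_N * 'I_N).2 \in Z) && adj p.1 p.2 : nat) = \sum_(b in Z) degB adj b.
Proof.
rewrite -(pair_bigA _ (fun a b => ((b \in Z) && adj a b : nat))) /= exchange_big /=.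
rewrite [RHS]big_mkcond /=; apply: eq_bigr => b _.
case: (boolP (b \in Z)) => bZ /=.
  by rewrite /degB cardset_sum.
by apply: big1.
Qed.

Lemma degB_le N (adj : 'I_N -> 'I_N -> bool) b : degB adj b <= N.
Proof. by apply: leq_trans (max_card _) _; rewrite card_ord. Qed.

Section KFactor.
Variables (N : nat) (p0 : 'I_N * 'I_N) (adj : 'I_N -> 'I_N -> bool) (k : nat).
Hypothesis degBk : forall b, k <= degB adj b.
Hypothesis ore : forall X Y : {set 'I_N}, k * (#|X| + #|Y|) <= eXY adj X Y + k * N.

Let T1 : finType := ('I_N * 'I_k + 'I_N * 'I_N)%type.
Let L : {set T1} := [set u : T1 | if u is inr q then q.2 < degB adj q.1 - k else true].
Let R : {set 'I_N * 'I_N} := [set p | adj p.1 p.2].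
Let r (u : T1) (p : 'I_N * 'I_N) : bool :=
  match u with inl q => p.1 == q.1 | inr q => p.2 == q.1 end.

Lemma gadget_hall (S : {set T1}) : S \subset L -> #|S| <= #|NB r R S|.
Proof.
move=> sSL.
set X := [set a | [exists i, inl (a, i) \in S]].
set Z := [set b | [exists j : 'I_N, inr (b, j) \in S]].
have st1 : #|S| <= #|X| * k + \sum_(b in Z) (degB adj b - k).
  rewrite card_sumset; apply: leq_add.
    rewrite -[k in _ * k]card_ord -cardsT -cardsX; apply: subset_leq_card.
    apply/subsetP => -[a i]; rewrite !inE /= andbT => h.
    by apply/existsP; exists i.
  apply: (@leq_trans #|[set q : 'I_N * 'I_N | (q.1 \in Z) && (q.2 < degB adj q.1 - k)]|).
    apply: subset_leq_card; apply/subsetP => -[b j]; rewrite !inE /= => h.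
    have := subsetP sSL _ h; rewrite inE /= => ->; rewrite andbT.
    by apply/existsP; exists j.
  rewrite (@card_pairset _ _ (fun b (j : 'I_N) => (b \in Z) && (j < degB adj b - k))) [X in _ <= X]big_mkcond /=; apply: leq_sum => b _.
  case: (b \in Z) => /=.
    by rewrite card_ltn geq_minr.
  by rewrite leqn0 cards_eq0; apply/eqP/setP => j; rewrite !inE.
have st2 : eXY adj X (~: Z) + \sum_(b in Z) degB adj b <= #|NB r R S|.
  apply: (@leq_trans #|[set p : 'I_N * 'I_N | adj p.1 p.2 && ((p.1 \in X) || (p.2 \in Z))]|).
    rewrite /eXY !cardset_sum -sum_degB -big_split /=; apply: leq_sum => p _.
    rewrite in_setC; case: (p.1 \in X); case: (p.2 \in Z); by case: (adj p.1 p.2).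
  apply: subset_leq_card; apply/subsetP => p; rewrite inE => /andP[ap /orP[]].
    rewrite inE => /existsP[i h]; apply/NBP; split; first by rewrite inE.
    by exists (inl (p.1, i)) => //=.
  rewrite inE => /existsP[j h]; apply/NBP; split; first by rewrite inE.
  by exists (inr (p.2, j)) => //=.
have st3 : k * #|X| <= eXY adj X (~: Z) + k * #|Z|.
  have cZ : #|Z| + #|~: Z| = N by rewrite cardsC card_ord.
  have h : k * (#|X| + #|~: Z|) <= eXY adj X (~: Z) + k * (#|Z| + #|~: Z|).
    by rewrite cZ; apply: ore.
  by move: h; rewrite mulnDr [k * (#|Z| + _)]mulnDr addnA leq_add2r.
have st4 : \sum_(b in Z) (degB adj b - k) + #|Z| * k = \sum_(b in Z) degB adj b.
  rewrite -sum_nat_const -big_split /=; apply: eq_bigr => b _; by rewrite subnK.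
apply: leq_trans st1 _; apply: leq_trans _ st2.
rewrite -st4 addnCA [#|X| * k + _]addnC leq_add2l mulnC (mulnC #|Z|).
exact: st3.
Qed.

Lemma kfactor : exists F : 'I_N -> 'I_N -> bool, (forall a b, F a b -> adj a b) /\
  (forall a, #|[set b | F a b]| = k) /\ (forall b, #|[set a | F a b]| <= k).
Proof.
have [f [fP fI]] := hall p0 gadget_hall.
have Linl a i : inl (a, i) \in L by rewrite inE.
exists (fun a b => [exists i : 'I_k, f (inl (a, i)) == (a, b)]); split; [|split].
- move=> a b /existsP[i /eqP e]; have := (fP _ (Linl a i)).1; by rewrite e inE.
- move=> a.
  have f1 i : (f (inl (a, i))).1 = a by apply/eqP; exact: (fP _ (Linl a i)).2.
  have -> : [set b | [exists i : 'I_k, f (inl (a, i)) == (a, b)]] =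
            [set (f (inl (a, i))).2 | i in [set: 'I_k]].
    apply/setP => b; rewrite inE; apply/existsP/imsetP.
      by case=> i /eqP e; exists i; rewrite ?inE // e.
    case=> i _ ->; exists i; apply/eqP.
    by rewrite [LHS]surjective_pairing f1.
  rewrite card_imset ?cardsT ?card_ord // => i j e.
  have : f (inl (a, i)) = f (inl (a, j)).
    by rewrite [LHS]surjective_pairing [RHS]surjective_pairing e !f1.
  by move/fI => /(_ (Linl a i) (Linl a j)) [].
- move=> b.
  set W := [set u in L | (f u).2 == b].
  have cW : #|W| <= degB adj b.
    rewrite -(card_in_imset (f := f) (D := W)); last first.
      by move=> u v /setIdP[uL _] /setIdP[vL _]; apply: fI.
    apply: (@leq_trans #|[set p : 'I_N * 'I_N | (p.2 == b) && adj p.1 p.2]|).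
      apply: subset_leq_card; apply/subsetP => p /imsetP[u]; move=> /setIdP[uL /eqP e] ->.
      by rewrite inE e eqxx /=; have := (fP u uL).1; rewrite inE e.
    rewrite cardset_sum -(pair_bigA _ (fun a b' => ((b' == b) && adj a b' : nat))) /=.
    rewrite exchange_big /= (bigD1 b) //= [X in _ + X]big1 ?addn0.
      by rewrite /degB cardset_sum; apply: eq_leq; apply: eq_bigr => a _; rewrite eqxx.
    by move=> b' nb; apply: big1 => a _; rewrite (negbTE nb).
  have cWr : degB adj b - k <= #|[set y | inr y \in W]|.
    apply: (@leq_trans #|[set q : 'I_N * 'I_N | (q.1 == b) && (q.2 < degB adj q.1 - k)]|).
      rewrite (@card_pairset _ _ (fun b' (j : 'I_N) => (b' == b) && (j < degB adj b' - k))).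
      rewrite (bigD1 b) //= [X in _ + X]big1 ?addn0.
        rewrite eqxx card_ltn leq_min leqnn andbT.
        by apply: leq_trans (leq_subr _ _) _; apply: degB_le.
      move=> b' nb; apply/eqP; rewrite cards_eq0; apply/eqP/setP => j.
      by rewrite !inE (negbTE nb).
    apply: subset_leq_card; apply/subsetP => -[b' j]; rewrite !inE /= => /andP[/eqP eb jl].
    subst b'.
    have uL : inr (b, j) \in L by rewrite inE.
    by rewrite jl /=; have := (fP _ uL).2.
  have cWl : #|[set a | [exists i : 'I_k, f (inl (a, i)) == (a, b)]]| <= #|[set x | inl x \in W]|.
    apply: leq_trans (leq_imset_card fst _); apply: subset_leq_card.
    apply/subsetP => a; rewrite inE => /existsP[i /eqP e]; apply/imsetP; exists (a, i) => //.
    by rewrite !inE e eqxx andbT.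
  move: cW; rewrite card_sumset => cW.
  have h1 := leq_trans (leq_add cWl cWr) cW.
  by rewrite -(leq_add2r (degB adj b - k)) subnKC // (leq_trans h1).
Qed.
End KFactor.

Lemma nat_CS (T : finType) (A : {set T}) (g : T -> nat) :
  (\sum_(i in A) g i) ^ 2 <= #|A| * \sum_(i in A) g i ^ 2.
Proof.
rewrite -(leq_pmul2l (isT : 0 < 2)).
have e1 : 2 * (\sum_(i in A) g i) ^ 2 = \sum_(i in A) \sum_(j in A) 2 * (g i * g j).
  rewrite expnS expn1 big_distrlr /= big_distrr /=; apply: eq_bigr => i _.
  by rewrite big_distrr.
have e2 : 2 * (#|A| * \sum_(i in A) g i ^ 2) = \sum_(i in A) \sum_(j in A) (g i ^ 2 + g j ^ 2).
  rewrite mul2n -addnn; transitivity (\sum_(i in A) (#|A| * g i ^ 2 + \sum_(j in A) g j ^ 2)).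
    by rewrite big_split /= -big_distrr /= sum_nat_const.
  by apply: eq_bigr => i _; rewrite big_split /= sum_nat_const.
rewrite e1 e2; apply: leq_sum => i _; apply: leq_sum => j _.
exact: leq_of_leqif (nat_Cauchy _ _).
Qed.

Section Count.
Variables (N : nat) (adj : 'I_N -> 'I_N -> bool).

Definition fX (X : {set 'I_N}) (b : 'I_N) := #|[set a in X | adj a b]|.

Lemma eXY_sum (X Y : {set 'I_N}) : eXY adj X Y = \sum_(b in Y) fX X b.
Proof.
rewrite /eXY cardset_sum.
rewrite -(pair_bigA _ (fun a b => [&& a \in X, b \in Y & adj a b] : nat)) /= exchange_big /=.
rewrite [RHS]big_mkcond /=; apply: eq_bigr => b _.
rewrite /fX cardset_sum_in.
case: (b \in Y); last by apply: big1 => a _; rewrite andbF; case: (a \in X).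
by rewrite [RHS]big_mkcond; apply: eq_bigr => a _; case: (a \in X).
Qed.

Lemma E_sum (X : {set 'I_N}) : \sum_(a in X) degA adj a = \sum_b fX X b.
Proof.
transitivity (\sum_(a in X) \sum_b (adj a b : nat)).
  by apply: eq_bigr => a _; rewrite /degA cardset_sum.
by rewrite exchange_big /=; apply: eq_bigr => b _; rewrite /fX cardset_sum_in.
Qed.

Lemma eXY_split (X Y : {set 'I_N}) : eXY adj X Y + eXY adj X (~: Y) = \sum_(a in X) degA adj a.
Proof.
rewrite E_sum !eXY_sum [RHS](bigID (fun b => b \in Y)) /=; congr (_ + _).
by apply: eq_bigl => b; rewrite in_setC.
Qed.

Lemma prod_sum (X1 X2 : {set 'I_N}) :
  \sum_b fX X1 b * fX X2 b = \sum_(a in X1) \sum_(a' in X2) codegA adj a a'.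
Proof.
transitivity (\sum_b \sum_(a in X1) \sum_(a' in X2) ((adj a b : nat) * (adj a' b : nat))).
  apply: eq_bigr => b _; rewrite /fX !cardset_sum_in big_distrlr //.
rewrite exchange_big /=; apply: eq_bigr => a _; rewrite exchange_big /=.
apply: eq_bigr => a' _; rewrite /codegA cardset_sum; apply: eq_bigr => b _.
by case: (adj a b); case: (adj a' b).
Qed.

Lemma codeg_diag a : codegA adj a a = degA adj a.
Proof. by rewrite /codegA /degA; apply: eq_card => b; rewrite !inE andbb. Qed.

End Count.
Arguments fX {N}.

Section RealSums.
Local Open Scope R_scope.
Variables (I : finType) (P : pred I).

Lemma sum_INR_le (F : I -> nat) (G : I -> R) :
  (forall i, P i -> INR (F i) <= G i) ->
  INR (\sum_(i | P i) F i)%N <= \big[Rplus/0]_(i | P i) G i.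
Proof.
move=> h; apply: (big_ind2 (fun (n : nat) (r : R) => INR n <= r)) => //.
- by rewrite /=; lra.
- by move=> n1 r1 n2 r2 h1 h2; rewrite plus_INR; lra.
Qed.

Lemma sum_INR_ge (F : I -> nat) (G : I -> R) :
  (forall i, P i -> G i <= INR (F i)) ->
  \big[Rplus/0]_(i | P i) G i <= INR (\sum_(i | P i) F i)%N.
Proof.
move=> h; apply: (big_ind2 (fun (r : R) (n : nat) => r <= INR n)) => //.
- by rewrite /=; lra.
- by move=> n1 r1 n2 r2 h1 h2; rewrite plus_INR; lra.
Qed.

Lemma Rsum_const (c : R) :
  \big[Rplus/0]_(i | P i) c = INR (\sum_(i | P i) 1)%N * c.
Proof.
apply: (big_ind2 (fun (r : R) (n : nat) => r = INR n * c)) => //.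
- by rewrite /=; lra.
- by move=> n1 r1 n2 r2 -> ->; rewrite plus_INR; lra.
- by move=> i _; rewrite /=; lra.
Qed.

Lemma Rsum_scale (F : I -> nat) (c : R) :
  \big[Rplus/0]_(i | P i) (INR (F i) * c) = INR (\sum_(i | P i) F i)%N * c.
Proof.
apply: (big_ind2 (fun (r : R) (n : nat) => r = INR n * c)) => //.
- by rewrite /=; lra.
- by move=> n1 r1 n2 r2 -> ->; rewrite plus_INR; lra.
Qed.
End RealSums.
Arguments sum_INR_le {I P F} G.
Arguments sum_INR_ge {I P F} G.
Arguments Rsum_const {I P} c.
Arguments Rsum_scale {I P} F c.

Section ReS.
Local Open Scope R_scope.

Lemma param_G (t d n x y' : R) :
  0 < t <= /100 -> 0 < d <= 1 -> 1 <= t^8 * (d * n) ->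
  0 <= y' -> 1 <= x - y' -> x <= n - y' ->
  0 <= x * (1 - t^6) * (d * n) - d * x * y' - ((1 - t^2) * (d * n) + 1) * (x - y') /\
  y' * (2 * x * (d * n) + 3 * t^6 * x^2 * d * (d * n)) <=
  (x * (1 - t^6) * (d * n) - d * x * y' - ((1 - t^2) * (d * n) + 1) * (x - y'))^2.
Proof.
intros [t0 t1] [d0 d1] hD hy hs hx.
set D := d * n.
set G := x * (1 - t^6) * D - d * x * y' - ((1 - t^2) * D + 1) * (x - y').
set T2 := t^2. set T3 := t^3. set T6 := t^6.
assert (eT3 : T3 = t * T2) by (unfold T3, T2; ring).
assert (eT6 : T6 = T3 * T3) by (unfold T6, T3; ring).
assert (e8 : t^8 * D = T6 * T2 * D) by (unfold T6, T2; ring).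
assert (hT2 : 0 < T2 <= /10000) by (unfold T2; split; nra).
assert (hT3 : 0 < T3 <= T2 / 100) by (rewrite eT3; split; nra).
assert (hT6 : 0 < T6 <= T3) by (rewrite eT6; split; nra).
assert (hT6' : T6 <= / 1000000000000) by (rewrite eT6; nra).
assert (hn : 0 < n).
{ destruct (Rle_lt_dec n 0) as [h|h]; [|exact h]. assert (D <= 0) by (unfold D; nra). nra. }
assert (hD0 : 0 < D) by (unfold D; nra).
assert (hT2D : 1000000000000 <= T2 * D).
{ rewrite e8 in hD. destruct (Rle_lt_dec 1000000000000 (T2 * D)) as [h|h]; [exact h|].
  assert (T6 * (T2 * D) < 1); [|nra].
  apply Rle_lt_trans with (/1000000000000 * (T2 * D)). apply Rmult_le_compat_r; nra. nra. }
assert (hT6D : 1 <= T6 * D).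
{ rewrite e8 in hD. destruct (Rle_lt_dec 1 (T6 * D)) as [h|h]; [exact h|]. nra. }
set s := x - y'. set x' := n - x.
set g := T6 + 3 * T3.
set al := (T2 - g) * D - 1.
assert (hg : 0 <= g <= T2 / 25) by (unfold g; split; nra).
assert (hal : 9 / 10 * (T2 * D) <= al) by (unfold al; nra).
assert (hGe : G - 3 * T3 * D * x = s * al + y' * (d * x' - g * D)).
{ unfold G, s, x', al, g, D, T2, T3, T6; ring. }
assert (hy'x' : y' <= x') by (unfold x'; lra).
assert (hGc : 3 * T3 * D * x <= G).
{ destruct (Rle_lt_dec (g * D) (d * x')) as [h|h].
  - assert (0 <= s * al) by (apply Rmult_le_pos; unfold s; nra).
    assert (0 <= y' * (d * x' - g * D)) by (apply Rmult_le_pos; lra).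
    lra.
  - assert (hx'g : x' <= g * n).
    { unfold D in h. destruct (Rle_lt_dec x' (g * n)) as [h'|h']; [exact h'|]. nra. }
    assert (hs2 : n - 2 * (g * n) <= s) by (unfold s, x' in *; lra).
    assert (hx'0 : 0 <= x') by (unfold x'; lra).
    assert (h1 : y' * (d * x' - g * D) >= - (g * n) * (g * D)).
    { assert (0 <= y' * (d * x')) by (apply Rmult_le_pos; nra).
      assert (y' * (g * D) <= (g * n) * (g * D)) by (apply Rmult_le_compat_r; nra).
      nra. }
    assert (h2 : s * al >= (n - 2 * (g * n)) * al) by (apply Rle_ge, Rmult_le_compat_r; nra).
    assert (h3 : (g * n) * (g * D) <= (n - 2 * (g * n)) * al).
    { assert (g * g <= T2 / 10) by nra.
      assert (n - 2 * (g * n) >= n / 2) by nra.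
      assert ((n - 2 * (g * n)) * al >= n / 2 * (9 / 10 * (T2 * D))) by nra.
      assert ((g * n) * (g * D) = n * D * (g * g)) by ring.
      assert (n * D * (g * g) <= n * D * (T2 / 10)) by (apply Rmult_le_compat_l; nra).
      assert (0 <= n * D * T2) by (apply Rmult_le_pos; nra).
      lra. }
    lra. }
assert (hx1 : 1 <= x) by lra.
assert (hpos : 0 <= 3 * T3 * D * x) by (repeat apply Rmult_le_pos; lra).
split; [lra|].
assert (hxn : d * x <= D) by (unfold D; nra).
assert (h1 : y' * (2 * x * D + 3 * T6 * x^2 * d * D) <= 2 * x^2 * D + 3 * T6 * x^2 * D * D).
{ assert (y' <= x) by lra.
  assert (0 <= 2 * x * D + 3 * T6 * x^2 * d * D) by
    (repeat (apply Rmult_le_pos || apply Rplus_le_le_0_compat); try lra; apply pow_le; lra).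
  assert (y' * (2 * x * D + 3 * T6 * x^2 * d * D) <= x * (2 * x * D + 3 * T6 * x^2 * d * D)) by
    (apply Rmult_le_compat_r; lra).
  assert (x * (3 * T6 * x^2 * d * D) = 3 * T6 * x^2 * D * (d * x)) by ring.
  assert (3 * T6 * x^2 * D * (d * x) <= 3 * T6 * x^2 * D * D) by (apply Rmult_le_compat_l; [|lra]; repeat apply Rmult_le_pos; try lra; apply pow_le; lra).
  nra. }
assert (h2 : (3 * T3 * D * x)^2 <= G^2).
{ assert (0 <= 3 * T3 * D * x) by nra. nra. }
assert (h3 : (3 * T3 * D * x)^2 = 9 * T6 * D * D * x^2) by (rewrite eT6; ring).
assert (h4 : 2 * x^2 * D + 3 * T6 * x^2 * D * D <= 9 * T6 * D * D * x^2).
{ assert (x^2 * D * (6 * (T6 * D) - 2) >= 0). apply Rle_ge, Rmult_le_pos; nra.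
  nra. }
lra.
Qed.

Lemma real_core (t d n x y' E e e' S2 Q : R) :
  0 < t <= /100 -> 0 < d <= 1 -> 1 <= t^8 * (d * n) ->
  0 <= y' -> 1 <= x - y' -> x <= n - y' ->
  e + e' = E -> e'^2 <= y' * Q -> e^2 <= (n - y') * (S2 - Q) -> 0 <= S2 - Q ->
  x * (1 - t^6) * (d * n) <= E ->
  S2 <= x * (2 * (d * n)) + x^2 * ((1 + t^6) * d^2 * n) ->
  ((1 - t^2) * (d * n) + 1) * (x - y') <= e.
Proof.
intros ht hd hD hy hs hx hE cs1 cs2 hSQ hEl hS2.
destruct (param_G t d n x y' ht hd hD hy hs hx) as [G0 G2].
set D := d * n in hD G0 G2 hEl hS2 *.
set G := x * (1 - t^6) * D - d * x * y' - ((1 - t^2) * D + 1) * (x - y') in G0 G2 *.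
set m := n - y'.
assert (hm : 0 < m) by (unfold m; lra).
assert (hdx : 0 <= d * x) by nra.
assert (sa : 0 <= (S2 - Q) - 2 * (d * x) * e + (d * x)^2 * m).
{ assert (m * ((S2 - Q) - 2 * (d * x) * e + (d * x)^2 * m) >= (e - d * x * m)^2).
  { assert (m * (S2 - Q) >= e^2) by (unfold m in *; lra). nra. }
  assert (0 <= (e - d * x * m)^2) by (apply pow2_ge_0).
  destruct (Rle_lt_dec 0 ((S2 - Q) - 2 * (d * x) * e + (d * x)^2 * m)) as [h|h]; [exact h|].
  assert (m * ((S2 - Q) - 2 * (d * x) * e + (d * x)^2 * m) < 0) by nra. lra. }
assert (sb : (e' - d * x * y')^2 <= y' * (Q - 2 * (d * x) * e' + (d * x)^2 * y')).
{ assert ((e' - d * x * y')^2 = e'^2 - 2 * (d * x) * e' * y' + (d * x)^2 * y'^2) by ring.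
  assert (y' * (Q - 2 * (d * x) * e' + (d * x)^2 * y') = y' * Q - 2 * (d * x) * e' * y' + (d * x)^2 * y'^2) by ring.
  lra. }
set V := S2 - 2 * (d * x) * E + (d * x)^2 * n.
assert (sc1 : Q - 2 * (d * x) * e' + (d * x)^2 * y' <= V).
{ unfold V. rewrite <- hE. unfold m in sa. nra. }
assert (sc2 : V <= 2 * x * D + 3 * t^6 * x^2 * d * D).
{ unfold V. assert (2 * (d * x) * (x * (1 - t^6) * D) <= 2 * (d * x) * E) by (apply Rmult_le_compat_l; lra).
  assert ((d * x)^2 * n = x^2 * d * D) by (unfold D; ring).
  assert (x^2 * ((1 + t^6) * d^2 * n) = (1 + t^6) * x^2 * d * D) by (unfold D; ring).
  assert (2 * (d * x) * (x * (1 - t^6) * D) = 2 * (1 - t^6) * x^2 * d * D) by ring.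
  nra. }
assert (sc : (e' - d * x * y')^2 <= G^2).
{ apply Rle_trans with (y' * V); [apply Rle_trans with (1 := sb); apply Rmult_le_compat_l; lra|].
  apply Rle_trans with (2 := G2). apply Rmult_le_compat_l; lra. }
assert (se : e' - d * x * y' <= G).
{ destruct (Rle_lt_dec (e' - d * x * y') G) as [h|h]; [exact h|].
  assert (G^2 < (e' - d * x * y')^2) by nra. lra. }
unfold G in se. lra.
Qed.

End ReS.

Section Bounds.
Local Open Scope R_scope.
Variables (N : nat) (adj : 'I_N -> 'I_N -> bool) (t d : R).
Hypothesis ht : 0 < t <= /100.
Hypothesis hd : 0 < d <= 1.
Hypothesis hK : 1 <= t^8 * (d * INR N).
Hypothesis H1 : forall a, (1 - t^6) * d * INR N <= INR (degA adj a).
Hypothesis H2 : forall b, (1 - t^6) * d * INR N <= INR (degB adj b).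
Hypothesis H3 : forall a a', a <> a' -> INR (codegA adj a a') <= (1 + t^6) * d^2 * INR N.

Let c2 := (1 + t^6) * d^2 * INR N.

Lemma small_t : 0 < t^6 <= /100 /\ 0 < t^8 <= /100.
Proof.
have p k : (0 < k)%N -> 0 < t^k <= /100.
  case: k => // k _; split; first by apply: pow_lt; lra.
  rewrite /= ; have : t^k <= 1.
    have := pow_incr t 1 k; rewrite pow1; apply; lra.
  have := pow_le t k; nra.
by split; apply: p.
Qed.

Lemma D_large : 100 <= d * INR N.
Proof.
have [_ [t80 t81]] := small_t.
case: (Rle_lt_dec 100 (d * INR N)) => // h.
have : t^8 * (d * INR N) < 1; last lra.
have := pos_INR N => hN; nra.
Qed.

Lemma c2_pos : 0 <= c2.
Proof.
rewrite /c2; have := pos_INR N; have : 0 <= t^6 by apply: pow_le; lra.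
move=> h1 h2; apply: Rmult_le_pos; last exact h2.
apply: Rmult_le_pos; first lra. apply: pow_le; lra.
Qed.

Lemma inner_ub (X : {set 'I_N}) a : a \in X ->
  INR (\sum_(a' in X) codegA adj a a')%N <= INR (degA adj a) + INR #|X| * c2.
Proof.
move=> aX; rewrite (bigD1 a aX) /= plus_INR codeg_diag.
apply: Rplus_le_compat_l.
apply: Rle_trans; first apply: (sum_INR_le (fun _ => c2)).
  move=> a' /andP[_ ne]; apply: H3; apply/eqP; by rewrite eq_sym.
rewrite Rsum_const; apply: Rmult_le_compat_r; first exact: c2_pos.
apply: le_INR; apply/leP.
by rewrite -sum1_card (bigD1 a aX) /= leq_addl.
Qed.

Lemma degA_ub a : INR (degA adj a) <= 2 * (d * INR N).
Proof.
have key : INR (degA adj a) * ((1 - t^6) * d * INR N) <= INR (degA adj a) + INR N * c2.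
  have e1 : (\sum_b fX adj [set a] b * fX adj setT b = \sum_(a' in setT) codegA adj a a')%N.
    by rewrite prod_sum big_set1.
  have e2 : (\sum_b fX adj [set a] b = degA adj a)%N.
    by rewrite -E_sum big_set1.
  have f2 b : fX adj setT b = degB adj b.
    by rewrite /fX /degB; apply: eq_card => a0; rewrite !inE.
  apply: Rle_trans; last first.
    have := inner_ub [set: 'I_N] a (in_setT a); rewrite cardsT card_ord; exact.
  rewrite -e1 -e2 -Rsum_scale; apply: sum_INR_ge => b _.
  rewrite mult_INR f2; apply: Rmult_le_compat_l; [exact: pos_INR|exact: H2].
have hN := pos_INR N.
have [t6 t8] := small_t.
have hD : 100 <= d * INR N by apply: D_large.
have hA := pos_INR (degA adj a).
rewrite /c2 in key.
have e : INR N * ((1 + t^6) * d^2 * INR N) = (1 + t^6) * (d * INR N) * (d * INR N) by ring.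
rewrite e in key.
set A := INR (degA adj a) in key hA *.
set D := d * INR N in key hD *.
have e2 : A * ((1 - t^6) * d * INR N) = A * ((1 - t^6) * D) by rewrite /D; ring.
rewrite e2 in key.
have h1 : A * ((1 + t^6) * D / 2) <= (1 + t^6) * D * D.
  have : (1 + t^6) * D / 2 <= (1 - t^6) * D - 1 by nra.
  nra.
have hp : 0 < (1 + t^6) * D / 2 by nra.
nra.
Qed.

Lemma INR_sq (k : nat) : INR (k ^ 2)%N = INR k ^ 2.
Proof. by rewrite expnS expn1 mult_INR /=; ring. Qed.

Lemma ore_half (m : nat) (X Y : {set 'I_N}) :
  INR m <= (1 - t^2) * (d * INR N) + 1 -> (#|X| <= #|Y|)%N ->
  (m * (#|X| + #|Y|) <= eXY adj X Y + m * N)%N.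
Proof.
move=> hm hXY.
case: (leqP (#|X| + #|Y|) N) => hxy.
  by apply: leq_trans (leq_mul (leqnn m) hxy) (leq_addl _ _).
have cY : (#|Y| + #|~: Y| = N)%N by rewrite cardsC card_ord.
set s := (#|X| + #|Y| - N)%N.
have es : (#|X| + #|Y| = s + N)%N by rewrite subnK // ltnW.
suff hs : (m * s <= eXY adj X Y)%N by rewrite es mulnDr leq_add2r.
set E := (\sum_(a in X) degA adj a)%N.
set e := eXY adj X Y. set e' := eXY adj X (~: Y).
set S2 := (\sum_b fX adj X b ^ 2)%N.
set Q := (\sum_(b in ~: Y) fX adj X b ^ 2)%N.
set QY := (\sum_(b in Y) fX adj X b ^ 2)%N.
have eS : (S2 = QY + Q)%N.
  rewrite /S2 /QY /Q (bigID (fun b => b \in Y)) /=; congr (_ + _)%N.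
  by apply: eq_bigl => b; rewrite in_setC.
have hE : (e + e' = E)%N by apply: eXY_split.
have cs1 : (e' ^ 2 <= #|~: Y| * Q)%N by rewrite /e' eXY_sum; apply: nat_CS.
have cs2 : (e ^ 2 <= #|Y| * QY)%N by rewrite /e eXY_sum; apply: nat_CS.
have hS2 : INR S2 <= INR #|X| * (2 * (d * INR N)) + INR #|X| ^ 2 * ((1 + t^6) * d^2 * INR N).
  have -> : S2 = (\sum_(a in X) \sum_(a' in X) codegA adj a a')%N.
    by rewrite -prod_sum /S2; apply: eq_bigr => b _; rewrite expnS expn1.
  apply: Rle_trans; first apply: (sum_INR_le (fun _ => 2 * (d * INR N) + INR #|X| * c2)).
    move=> a aX; apply: Rle_trans (inner_ub X a aX) _; apply: Rplus_le_compat_r; exact: degA_ub.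
  by rewrite Rsum_const sum1_card /c2; right; ring.
have hEl : INR #|X| * (1 - t^6) * (d * INR N) <= INR E.
  have h := sum_INR_ge (P := fun a => a \in X) (F := fun a => degA adj a) (fun _ => (1 - t^6) * d * INR N) (fun a _ => H1 a).
  by move: h; rewrite Rsum_const sum1_card => h; apply: Rle_trans h; right; ring.
have hNY : INR #|Y| + INR #|~: Y| = INR N by have := f_equal INR cY; rewrite plus_INR.
have hs' : INR s + INR N = INR #|X| + INR #|Y| by have := f_equal INR es; rewrite !plus_INR.
have hs1 : 1 <= INR s.
  have : (1 <= s)%N by rewrite /s subn_gt0.
  by move/leP/le_INR.
have rc := real_core t d (INR N) (INR #|X|) (INR #|~: Y|) (INR E) (INR e) (INR e') (INR S2) (INR Q) ht hd hK.
have hxy' : INR #|X| <= INR #|Y| by apply: le_INR; apply/leP.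
have hQ : INR S2 - INR Q = INR QY by rewrite eS plus_INR; ring.
have hQ0 := pos_INR QY.
have rc' : ((1 - t^2) * (d * INR N) + 1) * INR s <= INR e.
  have -> : INR s = INR #|X| - INR #|~: Y| by lra.
  apply: rc.
  - exact: pos_INR.
  - lra.
  - lra.
  - by have := f_equal INR hE; rewrite plus_INR.
  - by rewrite -INR_sq -mult_INR; apply: le_INR; apply/leP.
  - have -> : INR N - INR #|~: Y| = INR #|Y| by lra.
    by rewrite hQ -INR_sq -mult_INR; apply: le_INR; apply/leP.
  - lra.
  - exact: hEl.
  - exact: hS2.
apply/leP; apply: INR_le; rewrite mult_INR.
apply: Rle_trans rc'; apply: Rmult_le_compat_r => //; exact: pos_INR.
Qed.
End Bounds.

Lemma eXY_swap N (adj : 'I_N -> 'I_N -> bool) (X Y : {set 'I_N}) :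
  eXY (fun b a => adj a b) Y X = eXY adj X Y.
Proof.
rewrite /eXY !cardset_sum.
rewrite -(pair_bigA _ (fun a b => [&& a \in Y, b \in X & adj b a] : nat)).
rewrite -(pair_bigA _ (fun a b => [&& a \in X, b \in Y & adj a b] : nat)) /=.
rewrite exchange_big /=; apply: eq_bigr => a _; apply: eq_bigr => b _.
by case: (a \in X); case: (b \in Y).
Qed.

Lemma combin N (y0 : 'I_N) (p0 : 'I_N * 'I_N) (adj : 'I_N -> 'I_N -> bool) k :
  (forall b, k <= degB adj b) ->
  (forall X Y : {set 'I_N}, k * (#|X| + #|Y|) <= eXY adj X Y + k * N) ->
  exists M : 'I_k -> {perm 'I_N}, (forall i, perfect_matching adj (M i)) /\
    (forall i j, i <> j -> edge_disjoint (M i) (M j)).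
Proof.
move=> hB hO.
have [F [Fadj [FA FB]]] := @kfactor N p0 adj k hB hO.

have [M [MF MD]] := @decomp N y0 k F FA FB.
by exists M; split => // i a; apply: Fadj; apply: MF.
Qed.

Local Open Scope R_scope.

Lemma Rpower_pos x y : 0 < Rpower x y.
Proof. rewrite /Rpower; exact: exp_pos. Qed.

Lemma Rpower_t (th : R) (k : nat) : 0 < th ->
  Rpower th (1/6 * INR k) = (Rpower th (1/6)) ^ k.
Proof. move=> h; by rewrite -Rpower_mult Rpower_pow //; apply: Rpower_pos. Qed.

Lemma nat_between (r : R) : 0 <= r -> exists m : nat, r <= INR m <= r + 1.
Proof.
move=> r0; have [h1 h2] := archimed r.
have z0 : (0 <= up r)%Z by apply: le_IZR; lra.
exists (Z.to_nat (up r)); rewrite INR_IZR_INZ Z2Nat.id //; lra.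
Qed.

Theorem lemma6 :
  exists (theta0 K : R) (N0 : nat), (0 < theta0)%R /\
  forall (N : nat) (d theta : R) (adj : 'I_N -> 'I_N -> bool),
    (N0 <= N)%N ->
    (0 < d <= 1)%R ->
    (0 < theta <= theta0)%R ->
    (Rpower theta (4/3) * d ^ 2 * INR N >= K)%R ->
    (forall a : 'I_N, INR (degA adj a) >= (1 - theta) * d * INR N)%R ->
    (forall b : 'I_N, INR (degB adj b) >= (1 - theta) * d * INR N)%R ->
    (forall a a' : 'I_N, a <> a' ->
       INR (codegA adj a a') <= (1 + theta) * d ^ 2 * INR N)%R ->
    (forall b b' : 'I_N, b <> b' ->
       INR (codegB adj b b') <= (1 + theta) * d ^ 2 * INR N)%R ->
    exists (m : nat) (M : 'I_m -> {perm 'I_N}),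
      (INR m >= (1 - Rpower theta (1/3)) * d * INR N)%R /\
      (forall k : 'I_m, perfect_matching adj (M k)) /\
      (forall k k' : 'I_m, k <> k' -> edge_disjoint (M k) (M k')).
Proof.
exists ((/200)^6), 1, 1%N; split; first by apply: pow_lt; lra.
move=> N d th adj hN hd [th0 th1] hK H1 H2 H3 H4.
set t := Rpower th (1/6).
have t0 : 0 < t by apply: Rpower_pos.
have e6 : th = t^6.
  rewrite -Rpower_t //; have -> : 1/6 * INR 6 = 1 by rewrite /=; field.
  by rewrite Rpower_1.
have e2 : Rpower th (1/3) = t^2.
  rewrite -Rpower_t //; congr Rpower; rewrite /=; field.
have e8 : Rpower th (4/3) = t^8.
  rewrite -Rpower_t //; congr Rpower; rewrite /=; field.
have t1 : t <= /100.
  case: (Rle_lt_dec t (/100)) => // h.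
  have : (/100)^6 <= t^6 by apply: pow_incr; lra.
  rewrite -e6 => h'; have : (/200)^6 < (/100)^6 by rewrite /=; lra.
  lra.
have ht : 0 < t <= /100 by lra.
have hn := pos_INR N.
have hK' : 1 <= t^8 * (d * INR N).
  rewrite e8 in hK.
  have : 0 <= t^8 by apply: pow_le; lra.
  nra.
rewrite e6 in H1 H2 H3 H4.
have H1' a : (1 - t^6) * d * INR N <= INR (degA adj a) by have := H1 a; lra.
have H2' b : (1 - t^6) * d * INR N <= INR (degB adj b) by have := H2 b; lra.
have hD := @D_large N t d ht hK'.
have t2 : 0 < t^2 <= /10000 by split; [apply: pow_lt|rewrite /=]; nra.
have [m [hm1 hm2]] : exists m : nat, (1 - t^2) * (d * INR N) <= INR m <= (1 - t^2) * (d * INR N) + 1.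
  by apply: nat_between; nra.
have y0 : 'I_N by exists 0%N.
have hB : forall b, (m <= degB adj b)%N.
  move=> b; apply/leP; apply: INR_le; apply: Rle_trans (H2' b).
  apply: Rle_trans hm2 _.
  have e8' : t^8 * (d * INR N) = t^6 * (t^2 * (d * INR N)) by ring.
  have t6a : t^6 = t^2 * (t^2 * t^2) by ring.
  have t6 : t^6 <= t^2 / 2.
    rewrite t6a; have h4 : t^2 * t^2 <= /2 by nra.
    have := Rmult_le_compat_l (t^2) _ _ (Rlt_le _ _ (proj1 t2)) h4; lra.
  have t6b : 0 < t^6 by apply: pow_lt.
  have hT : 2 <= t^2 * (d * INR N).
    case: (Rle_lt_dec 2 (t^2 * (d * INR N))) => // h.
    have : t^6 * (t^2 * (d * INR N)) < 1 by nra.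
    lra.
  nra.
have hO : forall X Y : {set 'I_N}, (m * (#|X| + #|Y|) <= eXY adj X Y + m * N)%N.
  move=> X Y; case: (leqP #|X| #|Y|) => hXY.
    exact: (@ore_half N adj t d ht hd hK' H1' H2' H3 m X Y hm2).
  rewrite addnC -eXY_swap.
  apply: (@ore_half N (fun b a => adj a b) t d ht hd hK' H2' H1' H4 m Y X hm2).
  exact: ltnW.
have [M [MP MD]] := @combin N y0 (y0, y0) adj m hB hO.
exists m, M; split => //.
rewrite e2; lra.
Qed.
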